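(* Consider the discounted repeated power control game with discount factor $\lambda\in(0,1)$ described in the context. Assume that for every $i\in\mathcal{K}$, $$\lambda\le\frac{\eta_i^{\min}\delta(\beta^*,\tilde\gamma)}{\eta_i^{\min}\delta(\beta^*,\tilde\gamma)+\eta_i^{\max}\left[(K-1)f(\beta^* )-\delta(\beta^*,\tilde\gamma)\right]},$$ where $\delta(\beta^*,\tilde\gamma)=\frac{1-(K-1)\tilde\gamma}{\tilde\gamma}f(\tilde\gamma)-\frac{1-(K-1)\beta^*}{\beta^*}f(\beta^* )$. Then, for any distribution of the channel gains, the joint strategy in which each transmitter $i$ plays at stage $t$ the power $\tilde p_i(t)$ as long as all the other players have played the operating point powers $\tilde{\underline{p}}_{-i}$, and the one-shot Nash equilibrium power $p_i^*(t)$ otherwise, is a subgame perfect Nash equilibrium of the discounted repeated game.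
   Context: There are $K\ge2$ transmitters $i\in\mathcal{K}=\{1,\dots,K\}$; $\sigma^2>0$ is the noise variance; transmitter $i$ has rate $R_i>0$ and power set $[0,P_i^{\max}]$. At each stage $t$ transmitter $i$ has channel gain $g_i(t)$ with $|g_i(t)|^2\in[\eta_i^{\min},\eta_i^{\max}]$, $0<\eta_i^{\min}\le\eta_i^{\max}$ (random, with arbitrary distribution; transmitter $i$ knows its own current gain). For a power profile $\underline{p}$, $\mathrm{SINR}_i=\frac{p_i|g_i|^2}{\sum_{j\neq i}p_j|g_j|^2+\sigma^2}$ and the stage utility is $u_i(\underline{p})=\frac{R_i f(\mathrm{SINR}_i)}{p_i}$, with $f$ a common sigmoidal efficiency function, $f(0)=0$. $\beta^*$ is the unique positive solution of $xf'(x)-f(x)=0$ (with $(K-1)\beta^*<1$) and $p_i^*(t)=\frac{\sigma^2}{|g_i(t)|^2}\frac{\beta^*}{1-(K-1)\beta^*}$ is the one-shot Nash equilibrium power. It is assumed that there exists $x_0\in]0,\frac1{K-1}[$ with $\frac{f''(x)}{f'(x)}-\frac{2(K-1)}{1-(K-1)x}$ strictly positive on $]0,x_0[$ and strictly negative on $]x_0,\frac1{K-1}[$; $\tilde\gamma$ is the unique solution in $]0,\frac1{K-1}[$ of $x[1-(K-1)x]f'(x)-f(x)=0$, and the operating point powers are $\tilde p_i(t)=\frac{\sigma^2}{|g_i(t)|^2}\frac{\tilde\gamma}{1-(K-1)\tilde\gamma}$. Powers $p_i^*,\tilde p_i$ lie in $[0,P_i^{\max}]$. At each stage every transmitter observes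 the public signal $\omega(t)=\sigma^2+\sum_{i=1}^K|g_i(t)|^2p_i(t)$ (deviations from the operating point are detected through it). A pure strategy of transmitter $i$ is a sequence of maps $\tau_{i,t}$ from histories $(\omega(1),\dots,\omega(t-1),p_i(1),\dots,p_i(t-1))$ (together with the current own channel gain) to $[0,P_i^{\max}]$. The payoff of transmitter $i$ is the (expected) discounted sum $v_i^\lambda(\underline\tau)=\sum_{t=1}^\infty\lambda(1-\lambda)^{t-1}u_i(\underline{p}(t))$, where $\underline{p}(t)$ is the profile induced by $\underline\tau$. A joint strategy is a Nash equilibrium if no transmitter can increase its payoff by unilaterally deviating; it is subgame perfect if it induces a Nash equilibrium after every possible history. *)

(* Defs.v *)
From HB Require Import structures.
From mathcomp Require Import all_boot all_order all_algebra.
From mathcomp Require Import all_classical all_reals all_analysis.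
Set Implicit Arguments. Unset Strict Implicit. Unset Printing Implicit Defensive.
Import Order.TTheory GRing.Theory Num.Theory.
Import numFieldNormedType.Exports.
Local Open Scope classical_set_scope.
Local Open Scope ring_scope.

Section PowerGame.
Variable R : realType.

Definition sigmoidal (f : R -> R) : Prop :=
  [/\ f 0 = 0,
      {within [set x : R | 0 <= x], continuous f},
      (forall x : R, 0 < x -> derivable f x 1 /\ derivable (derive1 f) x 1),
      (forall x y : R, 0 <= x -> x < y -> f x < f y) /\ (exists2 xf : R, 0 < xf &
         (forall x, 0 < x < xf -> 0 < (derive1 (derive1 f)) x) /\
         (forall x, xf < x -> (derive1 (derive1 f)) x < 0)) &
      f x @[x --> +oo] --> (1 : R)].

Variable K : nat.

(* a power profile / a channel-gain profile (|g_i|^2) : one real per transmitter *)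
Definition profile := 'I_K -> R.

Definition signal (sigma2 : R) (g p : profile) : R :=
  sigma2 + \sum_(i < K) g i * p i.

Definition SINR (sigma2 : R) (g p : profile) (i : 'I_K) : R :=
  p i * g i / (\sum_(j < K | j != i) p j * g j + sigma2).

(* stage utility u_i = R_i f(SINR_i) / p_i  (with the convention x/0 = 0) *)
Definition utility (f : R -> R) (Rate : profile) (sigma2 : R) (g p : profile)
  (i : 'I_K) : R :=
  Rate i * f (SINR sigma2 g p i) / p i.

(* A pure strategy: maps (past public signals omega(1..t-1), own past powers
   p_i(1..t-1), current own channel gain |g_i(t)|^2) to a power. *)
Definition strategy := seq R -> seq R -> R -> R.

Definition valid_strategy (etamin etamax Pmax : profile) (i : 'I_K)
  (s : strategy) : Prop :=
  forall ws ps gi, etamin i <= gi <= etamax i -> 0 <= s ws ps gi <= Pmax i.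

(* history: public signals and each transmitter's own past powers *)
Definition history := (seq R * ('I_K -> seq R))%type.

Definition consistent_history (h : history) : Prop :=
  forall i, size (h.2 i) = size h.1.

(* powers played at the history h (stage size h.1 + 1) with gain sequence g *)
Definition powers_at (tau : 'I_K -> strategy) (g : nat -> profile)
  (h : history) : profile :=
  fun i => tau i h.1 (h.2 i) (g (size h.1) i).

Definition extend (sigma2 : R) (tau : 'I_K -> strategy) (g : nat -> profile)
  (h : history) : history :=
  let p := powers_at tau g h in
  (rcons h.1 (signal sigma2 (g (size h.1)) p), fun i => rcons (h.2 i) (p i)).

Fixpoint play (sigma2 : R) (tau : 'I_K -> strategy) (g : nat -> profile)
  (h0 : history) (n : nat) : history :=
  match n with
  | 0 => h0
  | n'.+1 => extend sigma2 tau g (play sigma2 tau g h0 n')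
  end.

(* discounted continuation payoff of transmitter i, for a realization g of
   the channel gains (g t = gains at stage t+1), starting after history h0;
   the weights are lambda (1-lambda)^(n) for the n-th stage of the subgame *)
Definition cont_payoff (f : R -> R) (Rate : profile) (sigma2 lambda : R)
  (tau : 'I_K -> strategy) (g : nat -> profile) (h0 : history) (i : 'I_K)
  : \bar R :=
  (\sum_(0 <= n <oo)
     ((lambda * (1 - lambda) ^+ n *
       utility f Rate sigma2 (g (size (play sigma2 tau g h0 n).1))
         (powers_at tau g (play sigma2 tau g h0 n)) i)%:E))%E.

Definition deviate (tau : 'I_K -> strategy) (i : 'I_K) (s : strategy)
  : 'I_K -> strategy :=
  fun j => if j == i then s else tau j.

Definition exp_cont_payoff d (T : measurableType d) (P : probability T R)
  (gain : nat -> 'I_K -> T -> R) (f : R -> R) (Rate : profile)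
  (sigma2 lambda : R) (tau : 'I_K -> strategy) (h0 : history) (i : 'I_K)
  : \bar R :=
  (\int[P]_w cont_payoff f Rate sigma2 lambda tau (fun t j => gain t j w) h0 i)%E.

Definition subgame_perfect d (T : measurableType d) (P : probability T R)
  (gain : nat -> 'I_K -> T -> R) (f : R -> R) (Rate : profile)
  (sigma2 lambda : R) (etamin etamax Pmax : profile)
  (tau : 'I_K -> strategy) : Prop :=
  (forall i, valid_strategy etamin etamax Pmax i (tau i)) /\
  forall (h : history), consistent_history h ->
  forall (i : 'I_K) (s : strategy), valid_strategy etamin etamax Pmax i s ->
    (exp_cont_payoff P gain f Rate sigma2 lambda (deviate tau i s) h i
       <= exp_cont_payoff P gain f Rate sigma2 lambda tau h i)%E.

(* The trigger strategy of the theorem: transmitter i plays the operating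
   point power tilde p_i(t) as long as every past public signal equals the
   operating-point signal omega~ = sigma^2 + sum_j |g_j|^2 tilde p_j
   = sigma^2 + K sigma^2 gt/(1-(K-1)gt) (i.e. no deviation from the operating
   point has been detected), and the one-shot Nash power p_i^*(t) otherwise. *)
Definition op_power (sigma2 gt gi : R) : R :=
  sigma2 / gi * (gt / (1 - (K.-1)%:R * gt)).

Definition op_signal (sigma2 gt : R) : R :=
  sigma2 + K%:R * sigma2 * gt / (1 - (K.-1)%:R * gt).

Definition trigger (sigma2 bstar gt : R) : 'I_K -> strategy :=
  fun i ws ps gi =>
    if all (fun w => w == op_signal sigma2 gt) ws
    then op_power sigma2 gt gi
    else op_power sigma2 bstar gi.

Definition delta (f : R -> R) (bstar gt : R) : R :=
  (1 - (K.-1)%:R * gt) / gt * f gt - (1 - (K.-1)%:R * bstar) / bstar * f bstar.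

End PowerGame.

(* Main.v *)
Require Import Defs.
From HB Require Import structures.
From mathcomp Require Import all_boot all_order all_algebra.
From mathcomp Require Import all_classical all_reals all_analysis.
Import Order.TTheory GRing.Theory Num.Theory.
Import numFieldNormedType.Exports.
Local Open Scope classical_set_scope.
Local Open Scope ring_scope.

From mathcomp Require Import ring lra.
Set Implicit Arguments. Unset Strict Implicit. Unset Printing Implicit Defensive.
Lemma int_mono (R : realType) d (T : measurableType d) (mu : {measure set T -> \bar R})
  (f g : T -> \bar R) : (forall x, (0 <= f x)%E) -> (forall x, (f x <= g x)%E) ->
  (\int[mu]_x f x <= \int[mu]_x g x)%E.
Proof.
move=> f0 fg.
have g0 : forall x, (0 <= g x)%E by move=> x; apply: le_trans (fg x).
rewrite !ge0_integralTE //.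
apply: ereal_sup_le => _ [h /= hf <-]; exists h => //= x.
exact: le_trans (hf x) (fg x).
Qed.

Section Ana.
Variable R : realType.
Variable f : R -> R.
Hypothesis hf : sigmoidal f.
Variable bstar : R.
Hypothesis hb : 0 < bstar.
Hypothesis hbu : forall x : R, 0 < x -> x * derive1 f x - f x = 0 -> x = bstar.

Let h (x : R) := x * (derive1 f) x - f x.
Let g (x : R) := f x / x.

Let dfx (x : R) : 0 < x -> is_derive x 1 f ((derive1 f) x).
Proof.
move=> x0; case: hf => _ _ hd _ _; have [d1 _] := hd x x0.
rewrite derive1E; exact: derivableP.
Qed.

Let ddfx (x : R) : 0 < x -> is_derive x 1 ((derive1 f)) (derive1 (derive1 f) x).
Proof.
move=> x0; case: hf => _ _ hd _ _; have [_ d2] := hd x x0.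
rewrite derive1E; exact: derivableP.
Qed.

Let cf (x : R) : 0 < x -> {for x, continuous f}.
Proof.
move=> x0; apply: differentiable_continuous; rewrite -derivable1_diffP.
by case: (dfx x0).
Qed.

Let cdf (x : R) : 0 < x -> {for x, continuous (derive1 f)}.
Proof.
move=> x0; apply: differentiable_continuous; rewrite -derivable1_diffP.
by case: (ddfx x0).
Qed.

Let ch (x : R) : 0 < x -> {for x, continuous h}.
Proof.
move=> x0; apply: continuousB; last exact: cf.
by apply: continuousM; [exact: cvg_id | exact: cdf].
Qed.

Let dg (x : R) : 0 < x -> is_derive x (1:R) g (h x / x ^+ 2).
Proof.
move=> x0.
have xn0 : x != 0 by rewrite gt_eqF.
have hv := @is_deriveV R id x 1 1 xn0 (is_derive_id x 1).
have := is_deriveM (dfx x0) hv.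
move=> H.
have H' : is_derive x 1 g (f x *: (- x ^- 2)%:A + x^-1 *: (derive1 f) x) := H.
suff -> : h x / x ^+ 2 = f x *: (- x ^- 2)%:A + x^-1 *: (derive1 f) x by exact: H'.
rewrite /h /GRing.scale /= mulr1.
by field.
Qed.

Let cg (x : R) : 0 < x -> {for x, continuous g}.
Proof.
move=> x0; apply: differentiable_continuous; rewrite -derivable1_diffP.
by case: (dg x0).
Qed.


Let within_seg (a b : R) : 0 < a -> {within `[a, b], continuous h}.
Proof.
move=> a0; apply: continuous_in_subspaceT => z; rewrite inE /= => /andP[az _].
by apply: ch; apply: (lt_le_trans a0 az).
Qed.

Let within_segg (a b : R) : 0 < a -> {within `[a, b], continuous g}.
Proof.
move=> a0; apply: continuous_in_subspaceT => z; rewrite inE /= => /andP[az _].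
by apply: cg; apply: (lt_le_trans a0 az).
Qed.

Let within_segf (a b : R) : 0 < a -> {within `[a, b], continuous (derive1 f)}.
Proof.
move=> a0; apply: continuous_in_subspaceT => z; rewrite inE /= => /andP[az _].
by apply: cdf; apply: (lt_le_trans a0 az).
Qed.

Let hpos0 : exists2 xf : R, 0 < xf & forall x, 0 < x < xf -> 0 < h x.
Proof.
case: hf => f00 fc _ [_ [xf xf0 [hconv _]]] _.
exists xf => // x /andP[x0 xxf].
have [c /[1!in_itv] /= /andP[c0 cx] Hc] : exists2 c, c \in `]0, x[ & f x - f 0 = derive1 f c * (x - 0).
  apply: MVT => //.
    move=> z /[1!in_itv] /= /andP[z0 _]; exact: dfx.
  apply: continuous_subspaceW fc => z /=; rewrite in_itv /= => /andP[z0 _]; exact: z0.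
have [d /[1!in_itv] /= /andP[cd dx] Hd] : exists2 d, d \in `]c, x[ & derive1 f x - derive1 f c = derive1 (derive1 f) d * (x - c).
  apply: MVT => //.
    move=> z /[1!in_itv] /= /andP[cz _]; apply: ddfx; exact: lt_trans cz.
  exact: within_segf.
have d2 : 0 < derive1 (derive1 f) d.
  apply: hconv; apply/andP; split; first exact: lt_trans cd.
  exact: lt_trans dx xxf.
have : 0 < derive1 (derive1 f) d * (x - c) by rewrite mulr_gt0 // subr_gt0.
rewrite -Hd => Hp.
rewrite /h; move: Hc; rewrite f00 !subr0 => ->.
rewrite [_ * x]mulrC -mulrBr; apply: mulr_gt0 => //; lra.
Qed.

Let hpos x : 0 < x < bstar -> 0 < h x.
Proof.
move=> /andP[x0 xb]; rewrite ltNge; apply/negP => hx.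
have [xf xf0 Hxf] := hpos0.
pose y := Num.min xf x / 2.
have m0 : 0 < Num.min xf x by rewrite lt_min xf0 x0.
have y0 : 0 < y by rewrite /y divr_gt0.
have yx : y < x.
  have : Num.min xf x <= x by rewrite ge_min lexx orbT.
  rewrite /y; lra.
have yxf : y < xf.
  have : Num.min xf x <= xf by rewrite ge_min lexx.
  rewrite /y; lra.
have hy : 0 < h y by apply: Hxf; rewrite y0.
have [c /[1!in_itv] /= /andP[yc cx] hc] : exists2 c, c \in `[y, x] & h c = 0.
  apply: IVT; first exact: ltW.
    exact: within_seg.
  apply/andP; split.
    by rewrite ge_min hx orbT.
  by rewrite le_max ltW.
have c0 : 0 < c by apply: lt_le_trans yc.
have := hbu c0 hc => cb.
move: cx; rewrite cb => bx; move: (le_lt_trans bx xb); by rewrite ltxx.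
Qed.

Let hneg x : bstar < x -> h x < 0.
Proof.
move=> bx; rewrite ltNge; apply/negP => hx.
have x0 : 0 < x by apply: lt_trans bx.
case: hf => f00 fc _ [finc _] flim.
have hx' : 0 < h x.
  rewrite lt_neqAle hx andbT; apply/negP => /eqP hx0.
  have := hbu x0 (esym hx0) => xb; move: bx; rewrite xb ltxx //.
have hy y : x <= y -> 0 < h y.
  move=> xy; rewrite ltNge; apply/negP => hyn.
  have [c /[1!in_itv] /= /andP[xc cy] hc] : exists2 c, c \in `[x, y] & h c = 0.
    apply: IVT => //; first exact: within_seg.
    apply/andP; split; first by rewrite ge_min hyn orbT.
    by rewrite le_max ltW.
  have c0 : 0 < c by apply: lt_le_trans xc.
  have := hbu c0 hc => cb; move: (lt_le_trans bx xc); by rewrite cb ltxx.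
have gy y : x <= y -> g x <= g y.
  move=> xy.
  have [c /[1!in_itv] /= /andP[xc cy] Hc] : exists2 c, c \in `[x, y] & g y - g x = (h c / c ^+ 2) * (y - x).
    apply: MVT_segment => //; last exact: within_segg.
    move=> z /[1!in_itv] /= /andP[xz _]; apply: dg; exact: lt_trans xz.
  have c0 : 0 < c by apply: lt_le_trans xc.
  have : 0 <= h c / c ^+ 2 * (y - x).
    apply: mulr_ge0; last by rewrite subr_ge0.
    by apply: divr_ge0; [apply: ltW; apply: hy | apply: exprn_ge0; apply: ltW].
  rewrite -Hc; lra.
have fx0 : 0 < f x by rewrite -f00; apply: finc.
have H2 : \forall t \near +oo, f t < 2 by apply: (cvgr_lt 1 flim); lra.
case: H2 => M [Mr HM].
pose y := Num.max (M + 1) (Num.max x (2 * x / f x + 1)).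
have My : M < y by rewrite /y lt_max; apply/orP; left; lra.
have xy : x <= y by rewrite /y !le_max lexx orbT.
have y2 : 2 * x / f x < y.
  rewrite /y !lt_max; apply/orP; right; apply/orP; right; lra.
have y0 : 0 < y by apply: lt_le_trans xy.
have fy := HM _ My.
have := gy _ xy; rewrite /g.
rewrite ler_pdivrMr // mulrAC ler_pdivlMr //.
move: y2; rewrite ltr_pdivrMr // => y2.
have fyp : f y * x < 2 * x by rewrite ltr_pM2r.
rewrite mulrC; lra.
Qed.

Lemma key_ineq x : 0 <= x -> f x * bstar <= x * f bstar.
Proof.
case: hf => f00 _ _ _ _.
rewrite le_eqVlt => /orP[/eqP <-|x0]; first by rewrite f00 !mul0r.
suff : g x <= g bstar.
  by rewrite /g ler_pdivrMr // mulrAC ler_pdivlMr // mulrC [x * _]mulrC.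
case: (ltgtP x bstar) => [xb|bx|->]; last by [].
- have [c /[1!in_itv] /= /andP[xc cb] Hc] : exists2 c, c \in `]x, bstar[ & g bstar - g x = (h c / c ^+ 2) * (bstar - x).
    apply: MVT => //; last exact: within_segg.
    move=> z /[1!in_itv] /= /andP[xz _]; apply: dg; exact: lt_trans xz.
  have c0 : 0 < c by apply: lt_trans xc.
  have : 0 <= h c / c ^+ 2 * (bstar - x).
    apply: mulr_ge0; last by rewrite subr_ge0 ltW.
    by apply: divr_ge0; [apply: ltW; apply: hpos; rewrite c0 | apply: exprn_ge0; apply: ltW].
  rewrite -Hc; lra.
- have [c /[1!in_itv] /= /andP[bc cx] Hc] : exists2 c, c \in `]bstar, x[ & g x - g bstar = (h c / c ^+ 2) * (x - bstar).
    apply: MVT => //; last exact: within_segg.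
    move=> z /[1!in_itv] /= /andP[bz _]; apply: dg; exact: lt_trans bz.
  have c0 : 0 < c by apply: lt_trans bc.
  have : h c / c ^+ 2 * (x - bstar) <= 0.
    apply: mulr_le0_ge0; last by rewrite subr_ge0 ltW.
    apply: mulr_le0_ge0; first by apply: ltW; apply: hneg.
    by rewrite invr_ge0 exprn_ge0 // ltW.
  rewrite -Hc; lra.
Qed.
End Ana.

Section Ser.
Variable R : realType.
Lemma partial_cmp (a b phi : nat -> R) :
  phi 0%N = 0 -> (forall n, a n <= b n + phi n.+1 - phi n) ->
  forall M, \sum_(0 <= n < M) a n <= \sum_(0 <= n < M) b n + phi M.
Proof.
move=> p0 hab; elim=> [|M IH]; first by rewrite !big_geq // p0 addr0.
rewrite !big_nat_recr //=; have := hab M; lra.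
Qed.

Lemma series_cmp (a b phi : nat -> R) (C q : R) :
  (forall n, 0 <= a n) -> (forall n, 0 <= b n) -> phi 0%N = 0 ->
  (forall n, phi n <= C * q ^+ n) -> 0 <= q < 1 ->
  (forall n, a n <= b n + phi n.+1 - phi n) ->
  (\sum_(0 <= n <oo) (a n)%:E <= \sum_(0 <= n <oo) (b n)%:E)%E.
Proof.
move=> a0 b0 p0 pC /andP[q0 q1] hab.
apply: lime_le; first by apply: is_cvg_nneseries => n _ _; rewrite lee_fin.
apply: nearW => k.
apply/lee_addgt0Pr => e e0.
have cq : (GRing.exp q : R ^nat) @ \oo --> 0 by apply: cvg_expr; rewrite ger0_norm.
have z0 : 0 < e / (`|C| + 1) by rewrite divr_gt0 // ltr_wpDl.
have H1 := cvgr_lt 0 cq _ z0.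
have [N _ HN] := filterI (nbhs_infty_ge k) (H1 _).
have [kM qM] := HN _ (leqnn N).
apply: (le_trans _ (_ : (\sum_(0 <= n < N) (b n)%:E + (phi N)%:E <= _)%E)).
  rewrite !sumEFin -EFinD lee_fin.
  apply: le_trans (partial_cmp p0 hab N).
  rewrite [X in _ <= X](big_cat_nat _ (n:=k)) //= lerDl.
  by apply: sumr_ge0 => *.
apply: leeD; first by apply: nneseries_lim_ge => *; rewrite lee_fin.
rewrite lee_fin; apply: (le_trans (pC N)).
have qN0 : 0 <= q ^+ N by apply: exprn_ge0.
apply: (le_trans (ler_norm _)); rewrite normrM (ger0_norm qN0).
have : `|C| * q ^+ N <= (`|C| + 1) * q ^+ N by rewrite ler_wpM2r // lerDl.
move=> h; apply: (le_trans h); rewrite -ler_pdivlMl ?ltr_wpDl //.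
by rewrite mulrC ltW.
Qed.
End Ser.

Lemma ar2 (R : realType) (lam qn r g emin emax U aop Xp d : R) :
  0 <= lam -> 0 <= qn -> 0 <= r -> 0 <= g -> g <= emax -> 0 <= Xp ->
  U - aop <= Xp -> lam * emax * Xp <= (1 - lam) * emin * d ->
  lam * qn * (r * g * U) <= lam * qn * (r * g * aop) + r * emin * d * ((1 - lam) * qn) - 0.
Proof.
move=> l0 q0 r0 g0 ge X0 hU hc.
have c1 : 0 <= lam * qn * r * g by rewrite !mulr_ge0.
have e2 := ler_wpM2l c1 hU.
have c2 : 0 <= lam * qn * r by rewrite !mulr_ge0.
have e3 : lam * qn * r * g * Xp <= lam * qn * r * emax * Xp.
  by apply: ler_wpM2r => //; apply: ler_wpM2l.
have c3 : 0 <= qn * r by rewrite mulr_ge0.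
have e5 := ler_wpM2l c3 hc.
nra.
Qed.

Lemma ar3 (R : realType) (lam qn r g emin bN aop d : R) :
  0 <= lam -> 0 <= qn -> 0 <= r -> emin <= g -> 0 <= d -> d = aop - bN ->
  lam * qn * (r * g * bN) <= lam * qn * (r * g * aop) + r * emin * d * ((1 - lam) * qn) - r * emin * d * qn.
Proof.
move=> l0 q0 r0 ge d0 dE.
have c2 : 0 <= lam * qn * r by rewrite !mulr_ge0.
have e1 : lam * qn * r * (emin * d) <= lam * qn * r * (g * d).
  by apply: ler_wpM2l => //; apply: ler_wpM2r.
rewrite dE in e1 *.
nra.
Qed.

Section Game.
Variables (R : realType) (K : nat).
Hypothesis hK : (2 <= K)%N.
Variables (s : R) (f : R -> R) (Rate : 'I_K -> R) (bstar : R).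
Hypothesis hs : 0 < s.
Hypothesis hRate : forall i, 0 < Rate i.
Hypothesis hb : 0 < bstar.
Hypothesis hfb : 0 <= f bstar.
Hypothesis hkey : forall x, 0 <= x -> f x * bstar <= x * f bstar.
Hypothesis hf0 : forall x, 0 <= x -> 0 <= f x.

Let k1 : R := (K.-1)%:R.

Lemma k1E : K%:R = k1 + 1 :> R.
Proof. by rewrite /k1 natr1 prednK // (leq_trans _ hK). Qed.

Lemma sum_others (i : 'I_K) (g p : profile R K) c :
  (forall j, 0 < g j) -> (forall j, j != i -> p j = s / g j * c) ->
  \sum_(j < K | j != i) p j * g j = k1 * (s * c).
Proof.
move=> g0 hp.
rewrite (eq_bigr (fun _ => s * c)); last first.
  move=> j ji; rewrite hp //; field; exact: lt0r_neq0.
rewrite sumr_const /k1 mulr_natl; congr (_ *+ _).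
by rewrite cardC1 card_ord.
Qed.

Lemma sum_all (g p : profile R K) c :
  (forall j, 0 < g j) -> (forall j, p j = s / g j * c) ->
  \sum_(j < K) g j * p j = K%:R * (s * c).
Proof.
move=> g0 hp.
rewrite (eq_bigr (fun _ => s * c)); last first.
  move=> j _; rewrite hp; field; exact: lt0r_neq0.
by rewrite sumr_const card_ord mulr_natl.
Qed.

Lemma util_bound (i : 'I_K) (g p : profile R K) c :
  0 <= c -> (forall j, 0 < g j) -> (forall j, j != i -> p j = s / g j * c) ->
  0 <= p i ->
  utility f Rate s g p i <= Rate i * g i / (s * (k1 * c + 1)) * (f bstar / bstar).
Proof.
move=> c0 g0 hp pi0.
have k10 : 0 <= k1 by rewrite /k1 ler0n.
have I0 : 0 < s * (k1 * c + 1) by apply: mulr_gt0 => //; have := mulr_ge0 k10 c0; lra.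
rewrite /utility /SINR (sum_others g0 hp).
have -> : k1 * (s * c) + s = s * (k1 * c + 1) by ring.
set I := s * (k1 * c + 1).
have gi0 := g0 i.
rewrite le_eqVlt in pi0; case/orP: pi0 => [/eqP <-|pi0].
  rewrite invr0 mulr0; apply: mulr_ge0; last by apply: divr_ge0 => //; apply: ltW.
  by apply: divr_ge0; [apply: mulr_ge0; apply: ltW|apply: ltW].
set x := p i * g i / I.
have x0 : 0 <= x by rewrite /x; apply: divr_ge0; [apply: mulr_ge0; apply: ltW|apply: ltW].
have := hkey x0 => H.
have c1 : 0 <= Rate i / (p i * bstar).
  by apply: divr_ge0; [apply: ltW|apply: mulr_ge0; apply: ltW].
have := ler_wpM2l c1 H.
have -> : Rate i / (p i * bstar) * (f x * bstar) = Rate i * f x / p i.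
  by field; rewrite !gt_eqF.
have -> : Rate i / (p i * bstar) * (x * f bstar) = Rate i * g i / I * (f bstar / bstar).
  by rewrite /x; field; rewrite !gt_eqF.
by [].
Qed.

Lemma util_exact (i : 'I_K) (g p : profile R K) gm :
  0 < gm -> k1 * gm < 1 -> (forall j, 0 < g j) ->
  (forall j, p j = s / g j * (gm / (1 - k1 * gm))) ->
  utility f Rate s g p i = Rate i * g i / s * (f gm * (1 - k1 * gm) / gm).
Proof.
move=> gm0 gm1 g0 hp.
have d0 : 0 < 1 - k1 * gm by rewrite subr_gt0.
rewrite /utility /SINR (sum_others (c := gm / (1 - k1 * gm)) g0) => [|j _]; last exact: hp.
have -> : p i * g i / (k1 * (s * (gm / (1 - k1 * gm))) + s) = gm.
  rewrite hp; field; rewrite !gt_eqF //.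
  have -> : K.-1%:R * (s * gm) + s * (1 - K.-1%:R * gm) = s :> R by ring.
  done.
rewrite hp; field; rewrite !gt_eqF //.
Qed.

Variables (gt lambda : R) (etamin etamax Pmax : 'I_K -> R).
Hypothesis hgt : 0 < gt.
Hypothesis hgt1 : k1 * gt < 1.
Hypothesis hb1 : k1 * bstar < 1.
Hypothesis hl : 0 < lambda < 1.

Let coop (ws : seq R) := all (fun w => w == op_signal K s gt) ws.
Let tau := trigger (K:=K) s bstar gt.

Lemma size_play (tau' : 'I_K -> strategy R) gg (h : history R K) n :
  size (play s tau' gg h n).1 = (size h.1 + n)%N.
Proof. by elim: n => [|n IH] /=; rewrite ?addn0 // size_rcons IH addnS. Qed.

Lemma powers_dev (i : 'I_K) sd gg (H : history R K) j : j != i ->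
  powers_at (deviate tau i sd) gg H j =
  op_power K s (if coop H.1 then gt else bstar) (gg (size H.1) j).
Proof.
by move=> ji; rewrite /powers_at /deviate (negbTE ji) /tau /trigger /coop; case: ifP.
Qed.

Lemma powers_tau gg (H : history R K) j :
  powers_at tau gg H j =
  op_power K s (if coop H.1 then gt else bstar) (gg (size H.1) j).
Proof. by rewrite /powers_at /tau /trigger /coop; case: ifP. Qed.

Lemma coop_rcons ws w : coop (rcons ws w) = (w == op_signal K s gt) && coop ws.
Proof. by rewrite /coop all_rcons. Qed.

Lemma op_powerE gm x : op_power K s gm x = s / x * (gm / (1 - k1 * gm)).
Proof. by []. Qed.

Lemma signal_op (g : profile R K) : (forall j, 0 < g j) ->
  signal s g (fun j => op_power K s gt (g j)) = op_signal K s gt.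
Proof.
move=> g0; rewrite /signal (sum_all (c := gt / (1 - k1 * gt))) //.
rewrite /op_signal -/k1; field.
by rewrite gt_eqF // subr_gt0.
Qed.

Lemma signal_dev (i : 'I_K) (g p : profile R K) : (forall j, 0 < g j) ->
  (forall j, j != i -> p j = op_power K s gt (g j)) ->
  signal s g p = op_signal K s gt -> p i = op_power K s gt (g i).
Proof.
move=> g0 hp.
rewrite /signal (bigD1 i) //=.
under eq_bigr => j ji do rewrite mulrC.
have hp' : forall j, j != i -> p j = s / g j * (gt / (1 - k1 * gt)) by move=> j /hp.
rewrite (sum_others g0 hp').
rewrite /op_signal k1E -/k1 => H.
have gi0 : g i != 0 by rewrite gt_eqF.
have d0 : 1 - k1 * gt != 0 by rewrite gt_eqF // subr_gt0.
rewrite op_powerE.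
have Hu : g i * p i = s * gt / (1 - k1 * gt).
  have : g i * p i = (s + (k1 + 1) * s * gt / (1 - k1 * gt)) - s - k1 * (s * (gt / (1 - k1 * gt))).
    by rewrite -H; ring.
  move=> ->; field; exact: d0.
have -> : p i = (g i * p i) / g i by field.
rewrite Hu; field; apply/andP; split; [exact: d0 | exact: gi0].
Qed.

Lemma util_ge0 (i : 'I_K) (g p : profile R K) : (forall j, 0 < g j) -> (forall j, 0 <= p j) ->
  0 <= utility f Rate s g p i.
Proof.
move=> g0 p0; rewrite /utility; apply: divr_ge0 => //; apply: mulr_ge0; first exact: ltW.
apply: hf0; rewrite /SINR; apply: divr_ge0; first by apply: mulr_ge0 => //; apply: ltW.
apply: addr_ge0; last exact: ltW.
by apply: sumr_ge0 => j _; apply: mulr_ge0 => //; apply: ltW.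
Qed.

Lemma op_power_gt0 gm x : 0 < gm -> k1 * gm < 1 -> 0 < x -> 0 < op_power K s gm x.
Proof.
move=> g0 g1 x0; rewrite op_powerE; apply: mulr_gt0; apply: divr_gt0 => //.
by rewrite subr_gt0.
Qed.

Lemma signal_op' (g p : profile R K) : (forall j, 0 < g j) ->
  (forall j, p j = op_power K s gt (g j)) ->
  signal s g p = op_signal K s gt.
Proof.
move=> g0 hp; rewrite -(signal_op g0) /signal; congr (_ + _).
by apply: eq_bigr => j _; rewrite hp.
Qed.

Lemma ncoop_play (tau' : 'I_K -> strategy R) gg (h : history R K) n :
  ~~ coop h.1 -> ~~ coop (play s tau' gg h n).1.
Proof. by move=> nc; elim: n => [|n IH] //=; rewrite coop_rcons negb_and IH orbT. Qed.

Lemma coop_tau gg (h : history R K) n : (forall t j, 0 < gg t j) ->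
  coop h.1 -> coop (play s tau gg h n).1.
Proof.
move=> g0 c; elim: n => [|n IH] //=; rewrite coop_rcons IH andbT.
apply/eqP; apply: signal_op' => // j; by rewrite powers_tau IH.
Qed.

Lemma pointwise (i : 'I_K) (sd : strategy R) (gg : nat -> profile R K) (h : history R K) :
  (forall j, 0 < etamin j) ->
  (forall t j, etamin j <= gg t j <= etamax j) ->
  valid_strategy etamin etamax Pmax i sd ->
  0 < delta K f bstar gt ->
  lambda * etamax i * Num.max (f bstar / bstar - f gt * (1 - k1 * gt) / gt) 0
    <= (1 - lambda) * etamin i * delta K f bstar gt ->
  (cont_payoff f Rate s lambda (deviate tau i sd) gg h i
     <= cont_payoff f Rate s lambda tau gg h i)%E.
Proof.
move=> em0 gb vs hd hc.
have g0 t j : 0 < gg t j.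
  by have /andP[h1 _] := gb t j; apply: lt_le_trans h1.
case/andP: hl => l0 l1.
rewrite /cont_payoff.
set H := play s (deviate tau i sd) gg h.
set T := play s tau gg h.
set L := Rate i * etamin i / s * delta K f bstar gt.
have L0 : 0 <= L.
  apply: mulr_ge0; last exact: ltW.
  by apply: divr_ge0; [apply: mulr_ge0; apply: ltW|apply: ltW].
pose phi n := if coop h.1 && ~~ coop (H n).1 then L * (1 - lambda) ^+ n else 0.
have q0 : 0 <= 1 - lambda by rewrite subr_ge0 ltW.
have devi n : powers_at (deviate tau i sd) gg (H n) i =
    sd (H n).1 ((H n).2 i) (gg (size (H n).1) i).
  by rewrite /powers_at /deviate eqxx.
have pwd n j : 0 <= powers_at (deviate tau i sd) gg (H n) j.
  case: (eqVneq j i) => [->|ji].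
    by rewrite devi; case/andP: (vs (H n).1 ((H n).2 i) _ (gb (size (H n).1) i)).
  by rewrite powers_dev //; case: ifP => _; apply: ltW; apply: op_power_gt0.
have pwt n j : 0 <= powers_at tau gg (T n) j.
  by rewrite powers_tau //; case: ifP => _; apply: ltW; apply: op_power_gt0.
apply: (@series_cmp R _ _ phi L (1 - lambda)).
- move=> n; apply: mulr_ge0; first by apply: mulr_ge0; [exact: ltW|exact: exprn_ge0].
  exact: util_ge0.
- move=> n; apply: mulr_ge0; first by apply: mulr_ge0; [exact: ltW|exact: exprn_ge0].
  exact: util_ge0.
- by rewrite /phi /= andbN.
- by move=> n; rewrite /phi; case: ifP => // _; apply: mulr_ge0 => //; exact: exprn_ge0.
- by rewrite q0 /= ltrBlDr ltrDl.
move=> n.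
rewrite !size_play.
set t := (size h.1 + n)%N.
have sizeH : size (H n).1 = t by rewrite /H size_play.
have sizeT : size (T n).1 = t by rewrite /T size_play.
have Hs : (H n.+1).1 = rcons (H n).1 (signal s (gg t) (powers_at (deviate tau i sd) gg (H n))).
  by rewrite /H /= -/(H n) sizeH.
set pd := powers_at (deviate tau i sd) gg (H n).
set pt := powers_at tau gg (T n).
have pdo j : j != i -> pd j = s / gg t j * ((if coop (H n).1 then gt else bstar) /
    (1 - k1 * (if coop (H n).1 then gt else bstar))).
  by move=> ji; rewrite /pd powers_dev // sizeH op_powerE.
have pto j : pt j = s / gg t j * ((if coop (T n).1 then gt else bstar) /
    (1 - k1 * (if coop (T n).1 then gt else bstar))).
  by rewrite /pt powers_tau sizeT op_powerE.
have pdi0 : 0 <= pd i by apply: pwd.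
set w := lambda * (1 - lambda) ^+ n.
have w0 : 0 <= w by apply: mulr_ge0; [exact: ltW|exact: exprn_ge0].
have gt0 := g0 t.
have r0 : 0 <= Rate i / s by apply: divr_ge0; apply: ltW.
have cg0 : 0 <= gt / (1 - k1 * gt) by apply: divr_ge0; [exact: ltW| rewrite subr_ge0 ltW].
have cb0 : 0 <= bstar / (1 - k1 * bstar) by apply: divr_ge0; [exact: ltW| rewrite subr_ge0 ltW].
have dE : delta K f bstar gt = f gt * (1 - k1 * gt) / gt - f bstar * (1 - k1 * bstar) / bstar.
  by rewrite /delta -/k1; ring.
have nzb : 1 - k1 * bstar != 0 by rewrite gt_eqF // subr_gt0.
have nzg : 1 - k1 * gt != 0 by rewrite gt_eqF // subr_gt0.
have e1 : k1 * bstar + (1 - k1 * bstar) = 1 by ring.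
have e2 : k1 * gt + (1 - k1 * gt) = 1 by ring.
have Lr : L = Rate i / s * etamin i * delta K f bstar gt by rewrite /L; ring.
have ge := gb t i; case/andP: ge => gmin gmax.
case Ch: (coop h.1); last first.
  have nH : ~~ coop (H n).1 by apply: ncoop_play; rewrite Ch.
  have nT : ~~ coop (T n).1 by apply: ncoop_play; rewrite Ch.
  rewrite /phi Ch /= !subr0 addr0.
  rewrite (util_exact (p := pt) _ hb hb1 (g0 t)); last by move=> j; rewrite pto (negbTE nT).
  apply: ler_wpM2l => //.
  apply: le_trans (util_bound (c := bstar / (1 - k1 * bstar)) cb0 (g0 t) _ pdi0) _.
    by move=> j ji; rewrite pdo // (negbTE nH).
  rewrite le_eqVlt; apply/orP; left; apply/eqP; field.
  by rewrite -/k1 ?e1 ?e2 oner_eq0 andbT ?(gt_eqF hs) ?(gt_eqF hb) ?(gt_eqF hgt) ?nzb ?nzg.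
have CT : coop (T n).1 by apply: coop_tau.
rewrite (util_exact (p := pt) _ hgt hgt1 (g0 t)); last by move=> j; rewrite pto CT.
case C1: (coop (H n.+1).1).
  move: (C1); rewrite Hs coop_rcons => /andP[/eqP sig C0].
  rewrite /phi Ch C1 C0 /= subr0 addr0.
  have pdi : pd i = op_power K s gt (gg t i).
    apply: (signal_dev (g0 t)) => //.
    by move=> j ji; rewrite pdo // C0 op_powerE.
  rewrite (util_exact (p := pd) _ hgt hgt1 (g0 t)) //.
  move=> j; case: (eqVneq j i) => [->|ji]; first by rewrite pdi op_powerE.
  by rewrite pdo // C0.
have hU : (1 - k1 * gt) * (f bstar / bstar) - f gt * (1 - k1 * gt) / gt
    <= Num.max (f bstar / bstar - f gt * (1 - k1 * gt) / gt) 0.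
  rewrite le_max; apply/orP; left.
  have : 0 <= k1 * gt * (f bstar / bstar).
    by apply: mulr_ge0; [apply: mulr_ge0; [rewrite /k1 ler0n|exact: ltW]|apply: divr_ge0 => //; exact: ltW].
  lra.
have X0 : 0 <= Num.max (f bstar / bstar - f gt * (1 - k1 * gt) / gt) 0 by rewrite le_max lexx orbT.
case C0: (coop (H n).1).
  rewrite /phi Ch C1 C0 /= exprS.
  apply: le_trans (_ : w * (Rate i / s * gg t i * ((1 - k1 * gt) * (f bstar / bstar))) <= _).
    apply: ler_wpM2l => //.
    apply: le_trans (util_bound (c := gt / (1 - k1 * gt)) cg0 (g0 t) _ pdi0) _.
      by move=> j ji; rewrite pdo // C0.
    rewrite le_eqVlt; apply/orP; left; apply/eqP; field.
    by rewrite -/k1 ?e1 ?e2 oner_eq0 andbT ?(gt_eqF hs) ?(gt_eqF hb) ?(gt_eqF hgt) ?nzb ?nzg.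
  rewrite Lr /w (mulrAC (Rate i) (gg t i) s^-1).
  exact: (ar2 (ltW l0) (exprn_ge0 _ q0) r0 (ltW (g0 t i)) gmax X0 hU hc).
rewrite /phi Ch C1 C0 /= exprS.
apply: le_trans (_ : w * (Rate i / s * gg t i * (f bstar * (1 - k1 * bstar) / bstar)) <= _).
  apply: ler_wpM2l => //.
  apply: le_trans (util_bound (c := bstar / (1 - k1 * bstar)) cb0 (g0 t) _ pdi0) _.
    by move=> j ji; rewrite pdo // C0.
  rewrite le_eqVlt; apply/orP; left; apply/eqP; field.
  by rewrite -/k1 ?e1 ?e2 oner_eq0 andbT ?(gt_eqF hs) ?(gt_eqF hb) ?(gt_eqF hgt) ?nzb ?nzg.
rewrite Lr /w (mulrAC (Rate i) (gg t i) s^-1).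
exact: (ar3 (ltW l0) (exprn_ge0 _ q0) r0 gmin (ltW hd) dE).
Qed.

Lemma cont_ge0 (tau' : 'I_K -> strategy R) gg (h : history R K) i :
  (forall t j, 0 < gg t j) -> (forall H j, 0 <= powers_at tau' gg H j) ->
  (0 <= cont_payoff f Rate s lambda tau' gg h i)%E.
Proof.
move=> g0 pw; case/andP: hl => l0 l1; rewrite /cont_payoff.
apply: nneseries_ge0 => n _ _; rewrite lee_fin; apply: mulr_ge0.
  by apply: mulr_ge0; [exact: ltW | apply: exprn_ge0; rewrite subr_ge0 ltW].
exact: util_ge0.
Qed.

Lemma dev_pw_ge0 (i : 'I_K) sd gg (H : history R K) j :
  (forall t j, etamin j <= gg t j <= etamax j) -> (forall t j, 0 < gg t j) ->
  valid_strategy etamin etamax Pmax i sd ->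
  0 <= powers_at (deviate tau i sd) gg H j.
Proof.
move=> gb g0 vs; case: (eqVneq j i) => [->|ji].
  rewrite /powers_at /deviate eqxx.
  by case/andP: (vs H.1 (H.2 i) _ (gb (size H.1) i)).
by rewrite powers_dev //; case: ifP => _; apply: ltW; apply: op_power_gt0.
Qed.

Lemma tau_pw_ge0 gg (H : history R K) j : (forall t j, 0 < gg t j) ->
  0 <= powers_at tau gg H j.
Proof. by move=> g0; rewrite powers_tau //; case: ifP => _; apply: ltW; apply: op_power_gt0. Qed.
End Game.

Lemma cond_derive (R : realType) (lam emin emax d Y : R) :
  0 < Y -> 0 < lam -> lam < 1 -> 0 < emin -> emin <= emax ->
  lam <= emin * d / (emin * d + emax * (Y - d)) ->
  0 < d /\ lam * emax * Num.max (Y - d) 0 <= (1 - lam) * emin * d.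
Proof.
move=> Y0 l0 l1 e0 ee hl.
have em0 : 0 < emax by apply: lt_le_trans ee.
have dpos : 0 < d.
  rewrite ltNge; apply/negP => d0.
  have N0 : emin * d <= 0 by rewrite pmulr_rle0.
  have D0 : 0 < emin * d + emax * (Y - d).
    have : (emin - emax) * d >= 0 by rewrite mulr_le0 // subr_le0.
    have : 0 < emax * Y by rewrite mulr_gt0.
    nra.
  have : emin * d / (emin * d + emax * (Y - d)) <= 0.
    by apply: mulr_le0_ge0 => //; rewrite invr_ge0 ltW.
  move: hl; lra.
split => //.
have N0 : 0 < emin * d by rewrite mulr_gt0.
have D0 : 0 < emin * d + emax * (Y - d).
  rewrite ltNge; apply/negP => D0.
  have : emin * d / (emin * d + emax * (Y - d)) <= 0.
    by apply: mulr_ge0_le0; [apply: ltW | rewrite invr_le0].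
  move: hl; lra.
move: hl; rewrite ler_pdivlMr // => hl.
rewrite /Num.max; case: ifP => _.
  rewrite mulr0; apply: mulr_ge0; [apply: mulr_ge0; [lra|exact: ltW] | exact: ltW].
nra.
Qed.

Unset Implicit Arguments.
Theorem theorem9 (R : realType) (K : nat) (hK : (2 <= K)%N)
  (sigma2 : R) (hsigma2 : 0 < sigma2)
  (Rate Pmax etamin etamax : 'I_K -> R)
  (hRate : forall i, 0 < Rate i)
  (heta : forall i, 0 < etamin i <= etamax i)
  (f : R -> R) (hf : sigmoidal f)
  (bstar : R) (hbstar : 0 < bstar)
  (hbstar_eq : bstar * derive1 f bstar - f bstar = 0)
  (hbstar_uniq : forall x : R, 0 < x -> x * derive1 f x - f x = 0 -> x = bstar)
  (hbstar_K : (K.-1)%:R * bstar < 1)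
  (hx0 : exists x0 : R, 0 < x0 < 1 / (K.-1)%:R /\
     (forall x : R, 0 < x < x0 ->
        0 < derive1 (derive1 f) x / derive1 f x
            - 2 * (K.-1)%:R / (1 - (K.-1)%:R * x)) /\
     (forall x : R, x0 < x < 1 / (K.-1)%:R ->
        derive1 (derive1 f) x / derive1 f x
            - 2 * (K.-1)%:R / (1 - (K.-1)%:R * x) < 0))
  (gt : R) (hgt : 0 < gt < 1 / (K.-1)%:R)
  (hgt_eq : gt * (1 - (K.-1)%:R * gt) * derive1 f gt - f gt = 0)
  (hgt_uniq : forall x : R, 0 < x < 1 / (K.-1)%:R ->
     x * (1 - (K.-1)%:R * x) * derive1 f x - f x = 0 -> x = gt)
  (hPmax : forall (i : 'I_K) (x : R), etamin i <= x <= etamax i ->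
     0 <= op_power K sigma2 bstar x <= Pmax i /\
     0 <= op_power K sigma2 gt x <= Pmax i)
  (lambda : R) (hlambda : 0 < lambda < 1)
  (hlambda_bound : forall i : 'I_K,
     lambda <= etamin i * delta K f bstar gt /
       (etamin i * delta K f bstar gt
        + etamax i * ((K.-1)%:R * f bstar - delta K f bstar gt)))
  (d : measure_display) (T : measurableType d) (P : probability T R)
  (gain : nat -> 'I_K -> T -> R)
  (hgain_meas : forall t i, measurable_fun setT (gain t i))
  (hgain_bnd : forall t i w, etamin i <= gain t i w <= etamax i) :
  subgame_perfect P gain f Rate sigma2 lambda etamin etamax Pmax
    (@trigger R K sigma2 bstar gt).
Proof.
have k10 : 0 < (K.-1)%:R :> R by rewrite ltr0n -ltnS prednK // ltnW.
case: (hf) => f00 _ _ [finc _] _.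
have hf0 : forall x : R, 0 <= x -> 0 <= f x.
  move=> x; rewrite le_eqVlt => /orP[/eqP <-|x0]; first by rewrite f00.
  by rewrite -f00; apply: ltW; apply: finc.
have hfb : 0 < f bstar by rewrite -f00; apply: finc.
have hkey := key_ineq hf hbstar hbstar_uniq.
have hgt1 : (K.-1)%:R * gt < 1.
  case/andP: hgt => _ h1.
  move: h1; rewrite -(ltr_pM2l k10) mul1r mulrC divff //; exact: lt0r_neq0.
have g0 : forall t j w, 0 < gain t j w.
  by move=> t j w; have /andP[h1 _] := hgain_bnd t j w; case/andP: (heta j) => h0 _; apply: lt_le_trans h1.
case/andP: hgt => gt0 _.
split.
  move=> i ws ps gi hgi; rewrite /trigger; case: ifP => _;
  by have [h1 h2] := hPmax i gi hgi.
move=> h _ i sd vs; rewrite /exp_cont_payoff; apply: int_mono.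
  move=> w; apply: (cont_ge0 hsigma2 hRate hf0 hlambda).
    by move=> t j /=; apply: g0.
  move=> H j; apply: (dev_pw_ge0 hsigma2 hbstar gt0 hgt1 hbstar_K).
  - by move=> t j' /=; apply: hgain_bnd.
  - by move=> t j' /=; apply: g0.
  - exact: vs.
move=> w.
have emin0 : forall j, 0 < etamin j by move=> j; case/andP: (heta j).
case/andP: (heta i) => ei eie.
case/andP: (hlambda) => l0 l1.
have Y0 : 0 < (K.-1)%:R * f bstar by rewrite mulr_gt0.
have [hd hc] := cond_derive Y0 l0 l1 ei eie (hlambda_bound i).
apply: (pointwise (etamin := etamin) (etamax := etamax) (Pmax := Pmax) hK hsigma2 hRate hbstar (ltW hfb) hkey hf0 gt0 hgt1 hbstar_K hlambda _ emin0 _ vs hd).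
  by move=> t j /=; apply: hgain_bnd.
have XE : f bstar / bstar - f gt * (1 - (K.-1)%:R * gt) / gt = (K.-1)%:R * f bstar - delta K f bstar gt.
  by rewrite /delta; field; rewrite !gt_eqF.
by rewrite XE.
Qed.
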